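(* Let $\upsilon\in(0,1]$, $P_b>0$, $h>0$, $T_c>0$, $\sigma^2>0$, $B>0$, $R\ge 0$ and $\ell>0$. Define $E_{\mathrm{MPT}}(t)=\upsilon P_bh(T_c-t)$ and $E_{\mathrm{off}}(t)=(2^{\frac{\ell}{Bt}}-1)\frac{\sigma^2}{h}t$, and consider Problem P8: maximize $E_{\mathrm{MPT}}(t)-E_{\mathrm{off}}(t)$ over $t$ subject to $0<t\le T_c$ and $R+E_{\mathrm{MPT}}(t)-E_{\mathrm{off}}(t)\ge 0$. Let $t^*$ be the optimal $t$ and $G_{\mathrm{off}}(\ell,R,h)=E_{\mathrm{MPT}}(t^* )-E_{\mathrm{off}}(t^* )$. With $W$ the principal branch of the Lambert function ($W(x)e^{W(x)}=x$) and $w=W\!\left(\frac{\upsilon P_bh^2}{\sigma^2e}-\frac1e\right)$, define $$\rho(h)=\frac{\ln 2}{B(1+w)},\quad y(h)=\frac{\sigma^2\ln 2}{Bh}e^{w+1},\quad c=\frac{T_cB(1+w)}{\ln 2},\quad c'=BT_c\log_2\!\left(1+\frac{Rh}{\sigma^2T_c}\right).$$ Then: (1) if either (a) $R\le\frac{BT_cy(h)}{\ln2}-\frac{\sigma^2}{h}T_c$ and $\ell\le\frac{\upsilon P_bhT_c+R}{y(h)}$, or (b) $R>\frac{BT_cy(h)}{\ln2}-\frac{\sigma^2}{h}T_c$ and $\ell<c$, then $t^*=\rho(h)\ell$ and $G_{\mathrm{off}}(\ell,R,h)=\upsilon P_bhT_c-y(h)\ell$; (2) if $R>\frac{BT_cy(h)}{\ln2}-\frac{\sigma^2}{h}T_c$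 and $c\le\ell\le c'$, then $t^*=T_c$ and $G_{\mathrm{off}}(\ell,R,h)=-(2^{\frac{\ell}{BT_c}}-1)\frac{\sigma^2}{h}T_c$; (3) for all other combinations of $R$ and $\ell$, Problem P8 is infeasible.
   Context: This concerns offloading in a single fading block of duration $T_c$ with channel power gain $h$: $\ell$ bits are to be offloaded, $R$ is residual energy carried over from previous blocks, the block is split into power transfer of length $T_c-t$ and transmission of length $t$ at fixed rate over bandwidth $B$ with noise variance $\sigma^2$, $\upsilon$ is the energy conversion efficiency and $P_b$ the base-station transmit power. *)

(* Defs.v *)
From Stdlib Require Import Reals Lra ClassicalEpsilon.
Open Scope R_scope.

(* Principal branch of the Lambert W function: for x >= -1/e, W0 x is the
   unique w >= -1 with w * e^w = x.  (Outside that domain the value is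
   unspecified; it is only used here at arguments > -1/e.) *)
Definition LambertW0 (x : R) : R :=
  epsilon (inhabits 0%R) (fun w => -1 <= w /\ w * exp w = x).

Definition log2 (x : R) : R := ln x / ln 2.

Definition E_MPT (ups Pb h Tc t : R) : R := ups * Pb * h * (Tc - t).

Definition E_off (s2 h B l t : R) : R :=
  (Rpower 2 (l / (B * t)) - 1) * (s2 / h) * t.

Definition P8_obj (ups Pb h Tc s2 B l t : R) : R :=
  E_MPT ups Pb h Tc t - E_off s2 h B l t.

Definition P8_feasible (ups Pb h Tc s2 B R0 l t : R) : Prop :=
  0 < t <= Tc /\ R0 + E_MPT ups Pb h Tc t - E_off s2 h B l t >= 0.

Definition P8_optimal (ups Pb h Tc s2 B R0 l t : R) : Prop :=
  P8_feasible ups Pb h Tc s2 B R0 l t /\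
  forall s, P8_feasible ups Pb h Tc s2 B R0 l s ->
    P8_obj ups Pb h Tc s2 B l s <= P8_obj ups Pb h Tc s2 B l t.

(* Main.v *)
Require Import Defs.
From Stdlib Require Import Reals Lra Psatz ClassicalEpsilon.
Open Scope R_scope.

Lemma exp_le_mono x y : x <= y -> exp x <= exp y.
Proof. intros [H|H]; [left; apply exp_increasing; auto | subst; lra]. Qed.

Lemma exp_le_inv' x y : exp x <= exp y -> x <= y.
Proof. intros H. destruct (Rle_or_lt x y) as [|H2]; auto.
  apply exp_increasing in H2; lra. Qed.

Lemma lambert_exists x : - / exp 1 < x -> exists w, -1 <= w /\ w * exp w = x.
Proof.
  intros Hx.
  set (b := 1 + Rabs x).
  assert (Hb : 1 <= b) by (unfold b; pose proof (Rabs_pos x); lra).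
  destruct (IVT (fun v => v * exp v - x) (-1) b) as [z [Hz1 Hz2]].
  - intros v; reg.
  - lra.
  - simpl. replace (-1) with (- (1)) by ring. rewrite exp_Ropp. lra.
  - pose proof (exp_ineq1_le b). pose proof (Rle_abs x).
    assert (b * (1 + b) <= b * exp b) by (apply Rmult_le_compat_l; lra).
    simpl. unfold b in *. nra.
  - exists z; split; lra.
Qed.

Lemma xexp_mono w v : -1 <= w -> w <= v -> w * exp w <= v * exp v.
Proof.
  intros H1 H2.
  destruct (Rle_or_lt w 0) as [Hw|Hw].
  - assert (He : exp w = exp v * exp (w - v)).
    { rewrite <- exp_plus. f_equal. ring. }
    pose proof (exp_ineq1_le (w - v)).
    pose proof (exp_pos v).
    assert (Hq : v - w * exp (w - v) >= (v - w) * (1 + w)) by nra.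
    assert (Hq2 : (v - w) * (1 + w) >= 0) by nra.
    rewrite He. nra.
  - assert (exp w <= exp v) by (apply exp_le_mono; lra).
    pose proof (exp_pos w). nra.
Qed.

Lemma tangent m t s : 0 < t -> 0 < s ->
  exp (m / s) * (t + m - (m / s) * t) <= t * exp (m / t) /\
  (m / t <> m / s -> exp (m / s) * (t + m - (m / s) * t) < t * exp (m / t)).
Proof.
  intros Ht Hs.
  assert (He : exp (m / t) = exp (m / s) * exp (m / t - m / s)).
  { rewrite <- exp_plus. f_equal. ring. }
  assert (Hid : t + m - (m / s) * t = t * (1 + (m / t - m / s))) by (field; lra).
  rewrite He, Hid. pose proof (exp_pos (m/s)).
  split.
  - pose proof (exp_ineq1_le (m / t - m / s)).
    apply Rmult_le_compat_l with (r := exp (m/s) * t) in H0; [|nra]. nra.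
  - intros Hne. assert (m / t - m / s <> 0) by lra.
    pose proof (exp_ineq1 _ H0).
    apply Rmult_lt_compat_l with (r := exp (m/s) * t) in H1; [|nra]. nra.
Qed.

Definition G (a k m Tc t : R) := a * (Tc - t) - k * t * (exp (m / t) - 1).

Lemma keyA a k m w Tc t : 0 < k -> 0 < m -> -1 < w ->
  k * w * exp (w + 1) = a - k -> 0 < t ->
  G a k m Tc t <= G a k m Tc (m / (1 + w)) /\
  (t <> m / (1 + w) -> G a k m Tc t < G a k m Tc (m / (1 + w))).
Proof.
  intros Hk Hm Hw Hkey Ht.
  set (t0 := m / (1 + w)).
  assert (Ht0 : 0 < t0) by (unfold t0; apply Rdiv_lt_0_compat; lra).
  assert (Hmt0 : m / t0 = w + 1) by (unfold t0; field; lra).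
  assert (Hm0 : m = (1 + w) * t0) by (unfold t0; field; lra).
  destruct (tangent m t t0 Ht Ht0) as [T1 T2].
  rewrite Hmt0 in T1, T2.
  set (E0 := exp (w + 1)) in *.
  set (X := exp (m / t)) in *.
  unfold G. fold X. rewrite Hmt0. fold E0.
  assert (Hk2 : k * w * E0 * t0 = (a - k) * t0) by (rewrite Hkey; ring).
  assert (Hk3 : k * w * E0 * t = (a - k) * t) by (rewrite Hkey; ring).
  split.
  - assert (k * (E0 * (t + m - (w + 1) * t)) <= k * (t * X)) by (apply Rmult_le_compat_l; lra).
    rewrite Hm0 in H. nra.
  - intros Hne.
    assert (m / t <> w + 1).
    { intro Heq. apply Hne. unfold t0. replace (1 + w) with (m / t) by lra. field. split; lra. }
    specialize (T2 H).
    assert (k * (E0 * (t + m - (w + 1) * t)) < k * (t * X)) by (apply Rmult_lt_compat_l; lra).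
    rewrite Hm0 in H0. nra.
Qed.

Lemma keyB a k m w Tc t : 0 < k -> 0 < m -> -1 < w ->
  k * w * exp (w + 1) = a - k -> 0 < t -> t <= Tc -> Tc <= m / (1 + w) ->
  G a k m Tc t <= G a k m Tc Tc /\
  (t < Tc -> G a k m Tc t < G a k m Tc Tc).
Proof.
  intros Hk Hm Hw Hkey Ht HtT HT.
  assert (HTc : 0 < Tc) by lra.
  set (u := m / Tc).
  assert (Hu : w + 1 <= u).
  { unfold u. apply (Rmult_le_reg_r Tc); [lra|].
    replace (m / Tc * Tc) with m by (field; lra).
    apply (Rmult_le_compat_r (1 + w)) in HT; [|lra].
    replace (m / (1 + w) * (1 + w)) with m in HT by (field; lra). nra. }
  assert (Hmono : w * exp w <= (u - 1) * exp (u - 1)) by (apply xexp_mono; lra).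
  assert (Hmono2 : w * exp (w + 1) <= (u - 1) * exp u).
  { rewrite exp_plus. replace u with ((u - 1) + 1) at 2 by ring. rewrite exp_plus.
    pose proof (exp_pos 1). nra. }
  assert (Hm0 : m = u * Tc) by (unfold u; field; lra).
  destruct (tangent m t Tc Ht HTc) as [T1 T2].
  fold u in T1, T2.
  set (Eu := exp u) in *. set (X := exp (m / t)) in *.
  unfold G. fold X. fold u. fold Eu.
  assert (Hc : a - k <= k * (u - 1) * Eu).
  { rewrite <- Hkey. replace (k * w * exp (w + 1)) with (k * (w * exp (w+1))) by ring.
    replace (k * (u - 1) * Eu) with (k * ((u - 1) * Eu)) by ring.
    apply Rmult_le_compat_l; lra. }
  assert (Hp : 0 <= (Tc - t) * (k * (u - 1) * Eu - (a - k))) by (apply Rmult_le_pos; lra).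
  split.
  - assert (k * (Eu * (t + m - u * t)) <= k * (t * X)) by (apply Rmult_le_compat_l; lra).
    rewrite Hm0 in H. nra.
  - intros Hlt.
    assert (m / t <> u).
    { intro Heq. unfold u in Heq.
      assert (m / t * t * Tc = m / Tc * Tc * t) by (rewrite Heq; ring).
      replace (m / t * t * Tc) with (m * Tc) in H by (field; lra).
      replace (m / Tc * Tc * t) with (m * t) in H by (field; lra). nra. }
    specialize (T2 H).
    assert (k * (Eu * (t + m - u * t)) < k * (t * X)) by (apply Rmult_lt_compat_l; lra).
    rewrite Hm0 in H0. nra.
Qed.

Theorem corollary3 (ups Pb h Tc s2 B R0 l : R)
  (Hups : 0 < ups <= 1) (HPb : 0 < Pb) (Hh : 0 < h) (HTc : 0 < Tc)
  (Hs2 : 0 < s2) (HB : 0 < B) (HR : 0 <= R0) (Hl : 0 < l) :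
  let w := LambertW0 (ups * Pb * h ^ 2 / (s2 * exp 1) - / exp 1) in
  let rho := ln 2 / (B * (1 + w)) in
  let y := s2 * ln 2 / (B * h) * exp (w + 1) in
  let c := Tc * B * (1 + w) / ln 2 in
  let c' := B * Tc * log2 (1 + R0 * h / (s2 * Tc)) in
  let K := B * Tc * y / ln 2 - s2 / h * Tc in
  let case1 := (R0 <= K /\ l <= (ups * Pb * h * Tc + R0) / y) \/ (R0 > K /\ l < c) in
  let case2 := R0 > K /\ c <= l <= c' in
  (* (1) *)
  (case1 ->
     P8_optimal ups Pb h Tc s2 B R0 l (rho * l) /\
     (forall t, P8_optimal ups Pb h Tc s2 B R0 l t -> t = rho * l) /\
     P8_obj ups Pb h Tc s2 B l (rho * l) = ups * Pb * h * Tc - y * l) /\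
  (* (2) *)
  (case2 ->
     P8_optimal ups Pb h Tc s2 B R0 l Tc /\
     (forall t, P8_optimal ups Pb h Tc s2 B R0 l t -> t = Tc) /\
     P8_obj ups Pb h Tc s2 B l Tc = - (Rpower 2 (l / (B * Tc)) - 1) * (s2 / h) * Tc) /\
  (* (3) *)
  (~ case1 -> ~ case2 -> forall t, ~ P8_feasible ups Pb h Tc s2 B R0 l t).
Proof.
  intros w rho y c c' K case1 case2.
  assert (Hln2 : 0 < ln 2).
  { rewrite <- ln_1. apply ln_increasing; lra. }
  set (x := ups * Pb * h ^ 2 / (s2 * exp 1) - / exp 1) in w.
  pose proof (exp_pos 1) as He1.
  assert (Hx : - / exp 1 < x).
  { unfold x. assert (0 < ups * Pb * h ^ 2 / (s2 * exp 1)).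
    { apply Rdiv_lt_0_compat; [|apply Rmult_lt_0_compat; lra]. pose proof (pow_lt h 2 Hh). apply Rmult_lt_0_compat; [apply Rmult_lt_0_compat|]; lra. }
    lra. }
  assert (Hwspec : -1 <= w /\ w * exp w = x).
  { unfold w, LambertW0. apply epsilon_spec. apply lambert_exists; auto. }
  destruct Hwspec as [Hw1 Hw2].
  assert (Hw : -1 < w).
  { destruct Hw1 as [|Hw1]; auto. exfalso. rewrite <- Hw1 in Hw2.
    replace (-1) with (- (1)) in Hw2 by ring. rewrite exp_Ropp in Hw2. lra. }
  set (a := ups * Pb * h).
  set (k := s2 / h).
  set (m := l * ln 2 / B).
  set (E0 := exp (w + 1)).
  assert (Ha : 0 < a) by (unfold a; apply Rmult_lt_0_compat; [apply Rmult_lt_0_compat|]; lra).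
  assert (Hk : 0 < k) by (unfold k; apply Rdiv_lt_0_compat; lra).
  assert (Hm : 0 < m) by (unfold m; apply Rdiv_lt_0_compat; [apply Rmult_lt_0_compat|]; lra).
  assert (HE0 : 0 < E0) by apply exp_pos.
  assert (Hkey : k * w * exp (w + 1) = a - k).
  { rewrite exp_plus. replace (k * w * (exp w * exp 1)) with (k * exp 1 * (w * exp w)) by ring.
    rewrite Hw2. unfold x, k, a. field. split; lra. }
  assert (Hobj : forall t, 0 < t -> P8_obj ups Pb h Tc s2 B l t = G a k m Tc t).
  { intros t Ht. unfold P8_obj, E_MPT, E_off, G, Rpower.
    replace (l / (B * t) * ln 2) with (m / t) by (unfold m; field; lra).
    fold a k. ring. }
  assert (Hfeas : forall t, P8_feasible ups Pb h Tc s2 B R0 l t <->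
     0 < t <= Tc /\ R0 + G a k m Tc t >= 0).
  { intros t. unfold P8_feasible. split; intros [H1 H2]; split; auto;
    rewrite <- Hobj in * by lra; unfold P8_obj in *; lra. }
  set (t0 := rho * l).
  assert (Ht0 : t0 = m / (1 + w)) by (unfold t0, rho, m; field; lra).
  assert (Ht0pos : 0 < t0) by (rewrite Ht0; apply Rdiv_lt_0_compat; lra).
  assert (HA : forall t, 0 < t -> G a k m Tc t <= G a k m Tc t0 /\
             (t <> t0 -> G a k m Tc t < G a k m Tc t0)).
  { intros t Ht. rewrite Ht0. apply keyA; auto. }
  assert (HBk : Tc <= t0 -> forall t, 0 < t -> t <= Tc -> G a k m Tc t <= G a k m Tc Tc /\
             (t < Tc -> G a k m Tc t < G a k m Tc Tc)).
  { intros HT t Ht HtT. rewrite Ht0 in HT. apply keyB with w; auto. }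
  assert (Hyl : y * l = k * m * E0) by (unfold y, k, m, E0; field; lra).
  assert (HGt0 : G a k m Tc t0 = a * Tc - y * l).
  { unfold G. assert (Hmt0 : m / t0 = w + 1) by (rewrite Ht0; field; lra).
    rewrite Hmt0, Hyl. fold E0. fold E0 in Hkey.
    assert (Hm0 : m = (1 + w) * t0) by (rewrite Ht0; field; lra).
    rewrite Hm0. assert (k * w * E0 * t0 = (a - k) * t0) by (rewrite Hkey; ring). nra. }
  assert (Hy : 0 < y) by (unfold y; apply Rmult_lt_0_compat; [apply Rdiv_lt_0_compat; nra | apply exp_pos]).
  set (p := ln 2 / (B * (1 + w))).
  assert (Hp : 0 < p) by (unfold p; apply Rdiv_lt_0_compat; nra).
  assert (Hlc : t0 - Tc = (l - c) * p) by (unfold t0, rho, c, p; field; lra).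
  assert (HK : K = k * Tc * E0 - k * Tc) by (unfold K, y, k, E0; field; lra).
  assert (HyC : a * Tc + K = y * c).
  { rewrite HK. fold E0 in Hkey. unfold y, c. fold E0.
    replace (s2 * ln 2 / (B * h) * E0 * (Tc * B * (1 + w) / ln 2)) with (k * Tc * E0 + (k * w * E0) * Tc)
      by (unfold k; field; lra). rewrite Hkey. ring. }
  assert (HGTc : G a k m Tc Tc = - (k * Tc * (exp (m / Tc) - 1))) by (unfold G; ring).
  assert (Hc' : l <= c' <-> R0 + G a k m Tc Tc >= 0).
  { set (z := 1 + R0 * h / (s2 * Tc)).
    assert (Hz : 1 <= z) by (unfold z; assert (0 <= R0 * h / (s2 * Tc)) by (unfold Rdiv; apply Rmult_le_pos; [nra| left; apply Rinv_0_lt_compat; nra]); lra).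
    assert (Hkz : k * Tc * (z - 1) = R0) by (unfold k, z; field; lra).
    assert (Hlc' : l - c' = (m / Tc - ln z) * (B * Tc / ln 2)). { unfold c', log2, m. fold z. field; lra. }
    assert (Hq : 0 < B * Tc / ln 2) by (apply Rdiv_lt_0_compat; nra).
    rewrite HGTc. split; intros H.
    - assert (m / Tc <= ln z) by nra.
      apply exp_le_mono in H0. rewrite exp_ln in H0 by lra.
      assert (k * Tc * (exp (m / Tc) - 1) <= k * Tc * (z - 1)) by (apply Rmult_le_compat_l; nra). lra.
    - assert (exp (m / Tc) <= z).
      { assert (k * Tc * (exp (m / Tc) - 1) <= k * Tc * (z - 1)) by lra.
        apply Rmult_le_reg_l in H0; nra. }
      rewrite <- (exp_ln z) in H0 by lra. apply exp_le_inv' in H0. nra. }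
  assert (HobjTc : P8_obj ups Pb h Tc s2 B l Tc = - (Rpower 2 (l / (B * Tc)) - 1) * (s2 / h) * Tc)
    by (unfold P8_obj, E_MPT, E_off; ring).
  assert (Opt1 : t0 <= Tc -> R0 + G a k m Tc t0 >= 0 ->
     P8_optimal ups Pb h Tc s2 B R0 l t0 /\
     (forall t, P8_optimal ups Pb h Tc s2 B R0 l t -> t = t0)).
  { intros H1 H2. assert (Ft0 : P8_feasible ups Pb h Tc s2 B R0 l t0) by (apply Hfeas; lra).
    split.
    - split; auto. intros s Hs. apply Hfeas in Hs.
      rewrite !Hobj by lra. apply HA; lra.
    - intros t [Ft Hopt]. specialize (Hopt t0 Ft0). apply Hfeas in Ft.
      rewrite !Hobj in Hopt by lra.
      destruct (Req_dec t t0) as [|Hne]; auto.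
      exfalso. destruct (HA t ltac:(lra)) as [_ HH]. specialize (HH Hne). lra. }
  assert (Opt2 : Tc <= t0 -> R0 + G a k m Tc Tc >= 0 ->
     P8_optimal ups Pb h Tc s2 B R0 l Tc /\
     (forall t, P8_optimal ups Pb h Tc s2 B R0 l t -> t = Tc)).
  { intros H1 H2. assert (FTc : P8_feasible ups Pb h Tc s2 B R0 l Tc) by (apply Hfeas; lra).
    split.
    - split; auto. intros s Hs. apply Hfeas in Hs.
      rewrite !Hobj by lra. apply (HBk H1); lra.
    - intros t [Ft Hopt]. specialize (Hopt Tc FTc). apply Hfeas in Ft.
      rewrite !Hobj in Hopt by lra.
      destruct (Rle_lt_or_eq_dec t Tc ltac:(lra)) as [Hlt|]; [|auto].
      exfalso. destruct (HBk H1 t ltac:(lra) ltac:(lra)) as [_ HH]. specialize (HH Hlt). lra. }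
  split; [|split].
  - intros Hc1.
    assert (Hc1' : t0 <= Tc /\ R0 + G a k m Tc t0 >= 0).
    { rewrite HGt0. destruct Hc1 as [[H1 H2]|[H1 H2]].
      - assert (Hyl2 : y * l <= a * Tc + R0).
        { apply (Rmult_le_compat_l y) in H2; [|lra].
          replace (y * ((ups * Pb * h * Tc + R0) / y)) with (a * Tc + R0) in H2 by (unfold a; field; lra). lra. }
        split; [|lra].
        assert (y * l <= y * c) by lra.
        assert (l <= c) by (apply Rmult_le_reg_l with y; lra). nra.
      - split; [nra|].
        assert (y * l < y * c) by (apply Rmult_lt_compat_l; lra). lra. }
    destruct Hc1' as [H1 H2]. destruct (Opt1 H1 H2) as [O1 O2].
    split; [exact O1|]. split; [exact O2|].
    rewrite Hobj by lra. rewrite HGt0. reflexivity.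
  - intros [H1 [H2 H3]].
    assert (HT : Tc <= t0) by nra.
    apply Hc' in H3. destruct (Opt2 HT H3) as [O1 O2]. auto.
  - intros N1 N2 t Ft. apply Hfeas in Ft. destruct Ft as [Ht Ft].
    destruct (Rle_or_lt t0 Tc) as [HT|HT].
    + assert (F0 : R0 + G a k m Tc t0 >= 0) by (pose proof (HA t ltac:(lra)); lra).
      rewrite HGt0 in F0.
      assert (Hlc0 : l <= c) by nra.
      destruct (Rle_or_lt R0 K) as [HRK|HRK].
      * apply N1. left. split; auto.
        apply (Rmult_le_reg_l y); [lra|].
        replace (y * ((ups * Pb * h * Tc + R0) / y)) with (a * Tc + R0) by (unfold a; field; lra). lra.
      * destruct Hlc0 as [Hlc0|Hlc0].
        -- apply N1. right. auto.
        -- apply N2. split; auto. split; [lra|]. apply Hc'.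
           assert (t0 = Tc) by nra. replace (G a k m Tc Tc) with (G a k m Tc t0) by (rewrite H; reflexivity). rewrite HGt0. lra.
    + assert (FT : R0 + G a k m Tc Tc >= 0) by (pose proof (HBk ltac:(lra) t ltac:(lra) ltac:(lra)); lra).
      assert (Hlc0 : c < l) by nra.
      destruct (Rle_or_lt R0 K) as [HRK|HRK].
      * exfalso. rewrite HGTc in FT. rewrite HK in HRK.
        assert (k * Tc * exp (m / Tc) <= k * Tc * E0) by lra.
        apply Rmult_le_reg_l in H; [|nra].
        unfold E0 in H. apply exp_le_inv' in H.
        assert (t0 <= Tc).
        { rewrite Ht0. apply (Rmult_le_reg_r (1 + w)); [lra|].
          replace (m / (1 + w) * (1 + w)) with m by (field; lra).
          apply (Rmult_le_compat_r Tc) in H; [|lra].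
          replace (m / Tc * Tc) with m in H by (field; lra). nra. }
        lra.
      * apply N2. split; auto. split; [lra|]. apply Hc'. auto.
Qed.
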